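(* Let $A$ be a payoff Conway game. (1) Every winning strategy on $A$ plays only plays that are well-parenthesized for Player. (2) For every winning strategy $\sigma$ on $A$ and every winning strategy $\tau$ on $A^*\otimes\mathnormal{2}$, every play of the interaction $\sigma\Join\tau$ is well-parenthesized (for both Player and Opponent).
   Context: A Conway game $A=(V_A,E_A,\lambda_A)$ is a rooted directed graph with root $\star_A$ and polarity $\lambda_A:E_A\to\{-1,+1\}$ ($-1$ Opponent, $+1$ Player). Paths $s:x\twoheadrightarrow y$ are finite sequences of consecutive moves; $\epsilon_x$ is the empty path; $s;t$ concatenation; plays are paths from the root; alternating means consecutive moves have opposite polarities. A strategy on $A$ is a set of alternating even-length plays containing the empty play, whose nonempty plays start with Opponent, closed under even-length prefixes, and deterministic. A payoff Conway game has $\kappa_A=(\kappa_A^+,\kappa_A^-):\mathrm{Path}_A\to\mathbb{N}\times\mathbb{N}$ with: $\lambda_A(m)=-1\Rightarrow\kappa_A^+(m)=0$, $\lambda_A(m)=+1\Rightarrow\kappa_A^-(m)=0$; $\kappa_A(t)\le\kappa_A(s;t)$; $\kappa_A(s;t)\le\kappa_A(s)+\kappa_A(t)$; $\kappa_A(\epsilon_x)=(0,0)$. The dual $A^*$ reverses polarities and swaps $\kappa^+,\kappa^-$; the tensor $A\otimes B$ is the product graph with moves of either component, polarities inherited, and $\kappa_{A\otimes B}(s)=\kappa_A(s_{|A})+\kappa_B(s_{|B})$. A strategy plays a path $t:x\twoheadrightarrow y$ if some play $s:\star\twoheadrightarrow x$ in it has $s;t$ in it; it is winning if every path $s$ it plays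 satisfies $\kappa^+(s)=0\Rightarrow\kappa^-(s)=0$. A play $s$ is well-parenthesized for Player if every even-length path $t$ occurring in $s$ (as a segment) and ending with a Player move satisfies $\kappa_A^+(t)=0\Rightarrow\kappa_A^-(t)=0$; well-parenthesized for Opponent if every even-length path $t$ in $s$ ending with an Opponent move satisfies $\kappa_A^-(t)=0\Rightarrow\kappa_A^+(t)=0$; well-parenthesized if both. $\mathnormal{2}$ is the payoff game with graph $\bullet\xrightarrow{o}\bullet$: a single Opponent move $o$ with payoff $(0,0)$ (all its paths have payoff $(0,0)$). For $\sigma$ on $A$ and $\tau$ on $A^*\otimes\mathnormal{2}$, the interaction is $\sigma\Join\tau=\{\epsilon\}\cup\{s\cdot m\mid s\cdot m\in\sigma\text{ and } o\cdot s\in\tau\}$, where $s$ is a play and $m$ a move. *)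

(* Defs.v *)
From mathcomp Require Import all_boot.
Set Implicit Arguments. Unset Strict Implicit. Unset Printing Implicit Defensive.

Variant polarity := Opponent | Player.

Definition opp_pol (p : polarity) : polarity :=
  match p with Opponent => Player | Player => Opponent end.

(* A path is represented by its list of
   moves; the empty path eps_x (for any x) is the empty list, which is
   harmless since kappa(eps_x) = (0,0) for every x.
   kappa s = (kappa^+ s, kappa^- s). *)
Record cgame := CGame {
  pos : Type;
  mov : Type;
  src : mov -> pos;
  tgt : mov -> pos;
  root : pos;
  pol : mov -> polarity;
  kappa : seq mov -> nat * nat
}.

Section Paths.
Variable A : cgame.

Fixpoint is_path (s : seq (mov A)) : Prop :=
  match s with
  | [::] => True
  | m :: s' => match s' with
               | [::] => True
               | n :: _ => tgt m = src n /\ is_path s'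
               end
  end.

Definition path_ft (x y : pos A) (s : seq (mov A)) : Prop :=
  is_path s /\
  match s with
  | [::] => x = y
  | m :: _ => src m = x /\ tgt (last m s) = y
  end.

Definition is_play (s : seq (mov A)) : Prop := exists y, path_ft (root A) y s.

Fixpoint alternating (s : seq (mov A)) : Prop :=
  match s with
  | [::] => True
  | m :: s' => match s' with
               | [::] => True
               | n :: _ => pol m <> pol n /\ alternating s'
               end
  end.

Definition le_pair (a b : nat * nat) : Prop := a.1 <= b.1 /\ a.2 <= b.2.
Definition add_pair (a b : nat * nat) : nat * nat := (a.1 + b.1, a.2 + b.2).

Definition is_payoff_game : Prop :=
  (forall m, pol m = Opponent -> (@kappa A [:: m]).1 = 0) /\
  (forall m, pol m = Player -> (@kappa A [:: m]).2 = 0) /\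
  (forall s t, is_path (s ++ t) -> le_pair (@kappa A t) (@kappa A (s ++ t))) /\
  (forall s t, is_path (s ++ t) ->
      le_pair (@kappa A (s ++ t)) (add_pair (@kappa A s) (@kappa A t))) /\
  @kappa A [::] = (0, 0).

Definition is_strategy (sigma : seq (mov A) -> Prop) : Prop :=
  (forall s, sigma s -> is_play s /\ alternating s /\ ~~ odd (size s)) /\
  sigma [::] /\
  (forall m s, sigma (m :: s) -> pol m = Opponent) /\
  (forall s t, sigma (s ++ t) -> ~~ odd (size s) -> sigma s) /\
  (forall s m n n', sigma (rcons (rcons s m) n) ->
                    sigma (rcons (rcons s m) n') -> n = n').

Definition plays (sigma : seq (mov A) -> Prop) (t : seq (mov A)) : Prop :=
  exists x y s, path_ft (root A) x s /\ path_ft x y t /\ sigma s /\ sigma (s ++ t).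

Definition winning (sigma : seq (mov A) -> Prop) : Prop :=
  forall t, plays sigma t -> (@kappa A t).1 = 0 -> (@kappa A t).2 = 0.

Definition wp_player (s : seq (mov A)) : Prop :=
  forall u t v m, s = u ++ rcons t m ++ v -> ~~ odd (size (rcons t m)) ->
    pol m = Player ->
    (@kappa A (rcons t m)).1 = 0 -> (@kappa A (rcons t m)).2 = 0.

Definition wp_opponent (s : seq (mov A)) : Prop :=
  forall u t v m, s = u ++ rcons t m ++ v -> ~~ odd (size (rcons t m)) ->
    pol m = Opponent ->
    (@kappa A (rcons t m)).2 = 0 -> (@kappa A (rcons t m)).1 = 0.

Definition well_parenthesized (s : seq (mov A)) : Prop :=
  wp_player s /\ wp_opponent s.

End Paths.

Definition dual (A : cgame) : cgame :=
  @CGame (pos A) (mov A) (@src A) (@tgt A) (root A)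
         (fun m => opp_pol (pol m)) (fun s => ((@kappa A s).2, (@kappa A s).1)).

Definition restrL (A B : cgame) (s : seq ((mov A * pos B) + (pos A * mov B)))
  : seq (mov A) :=
  pmap (fun e => match e with inl (m, _) => Some m | inr _ => None end) s.
Definition restrR (A B : cgame) (s : seq ((mov A * pos B) + (pos A * mov B)))
  : seq (mov B) :=
  pmap (fun e => match e with inl _ => None | inr (_, m) => Some m end) s.

Definition tensor (A B : cgame) : cgame :=
  @CGame (pos A * pos B) ((mov A * pos B) + (pos A * mov B))
    (fun e => match e with inl (m, y) => (src m, y) | inr (x, n) => (x, src n) end)
    (fun e => match e with inl (m, y) => (tgt m, y) | inr (x, n) => (x, tgt n) end)
    (root A, root B)
    (fun e => match e with inl (m, _) => pol m | inr (_, n) => pol n end)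
    (fun s => add_pair (@kappa A (restrL s)) (@kappa B (restrR s))).

Definition two : cgame :=
  @CGame bool unit (fun _ => false) (fun _ => true) false
         (fun _ => Opponent) (fun _ => (0, 0)).

Definition o_cons (A : cgame) (s : seq (mov A)) : seq (mov (tensor (dual A) two)) :=
  inr (root A, tt) :: map (fun m => inl (m, true)) s.

Definition interaction (A : cgame) (sigma : seq (mov A) -> Prop)
    (tau : seq (mov (tensor (dual A) two)) -> Prop) (u : seq (mov A)) : Prop :=
  u = [::] \/
  exists s m, u = rcons s m /\ is_play (rcons s m) /\
              sigma (rcons s m) /\ tau (o_cons s).

(* Main.v *)
Require Import Defs.
From mathcomp Require Import all_boot.
Set Implicit Arguments. Unset Strict Implicit.
Set Implicit Arguments. Unset Strict Implicit.

Lemma alt_pol (A : cgame) (a b : seq (mov A)) (m : mov A) :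
  alternating (a ++ m :: b) ->
  pol m = if odd (size a) then opp_pol (pol (head m a)) else pol (head m a).
Proof.
elim: a => [|x a IH] //=.
case: a IH => [|y a] IH /= [Hne Halt].
- have {}IH := IH Halt. simpl in IH.
  by case: (pol x) (pol m) Hne => [] [].
- have {}IH := IH Halt. simpl in IH. rewrite IH.
  by case: (odd (size a)); case: (pol x) (pol y) Hne => [] [].
Qed.

Lemma strat_pol (A : cgame) (sigma : seq (mov A) -> Prop) a b m :
  is_strategy sigma -> sigma (a ++ m :: b) ->
  pol m = if odd (size a) then Player else Opponent.
Proof.
move=> [Hs [_ [Ho _]]] H.
have [_ [Halt _]] := Hs _ H.
rewrite (alt_pol Halt).
have -> : pol (head m a) = Opponent.
  by case: a H {Halt} => [|x a] /= H; apply: Ho H.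
by case: odd.
Qed.

Lemma path_split (A : cgame) (s t : seq (mov A)) x y :
  path_ft x y (s ++ t) -> exists z, path_ft x z s /\ path_ft z y t.
Proof.
elim: s x => [|m s IH] x /=.
  by move=> H; exists x; split.
case: s IH => [|n s] IH /=.
- move=> [Hp [Hx Hy]]. exists (tgt m). split; first by split.
  clear IH; case: t Hp Hy => [|n t] /=; first by move=> _ ->.
  by move=> [Ht Hp] Hy; split.
- move=> [[Ht Hp] [Hx Hy]].
  have [z [H1 H2]] := IH (src n) (conj Hp (conj erefl Hy)).
  exists z; split=> //. case: H1 => H1 [_ H3]. by split.
Qed.

Lemma strat_plays (A : cgame) (sigma : seq (mov A) -> Prop) a t b :
  is_strategy sigma -> sigma (a ++ t ++ b) -> ~~ odd (size a) ->
  ~~ odd (size (a ++ t)) -> plays sigma t.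
Proof.
move=> Hst H Ha Hat.
have [Hs [_ [_ [Hpre _]]]] := Hst.
have Sa : sigma a by apply: Hpre H Ha.
have Sat : sigma (a ++ t) by apply: (Hpre _ b) => //; rewrite -catA.
have [[y Hy] _] := Hs _ Sat.
have [z [H1 H2]] := path_split Hy.
by exists z, y, a.
Qed.

Lemma restrL_map (A B : cgame) (t : seq (mov A)) (y : pos B) :
  @restrL A B (map (fun m => inl (m, y)) t) = t.
Proof. by elim: t => //= m t ->. Qed.

Lemma part1 (A : cgame) (sigma : seq (mov A) -> Prop) :
  is_strategy sigma -> winning sigma -> forall s, sigma s -> wp_player s.
Proof.
move=> Hst Hw s Hs u t v m E Hev Hm.
have Hs' : sigma ((u ++ t) ++ m :: v) by rewrite -catA -cat_rcons -E.
have := strat_pol Hst Hs'. rewrite Hm size_cat.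
case Ho: (odd (size u + size t)) => // _.
rewrite size_rcons /= in Hev.
have Hu : ~~ odd (size u) by move: Ho Hev; rewrite oddD; case: odd; case: odd.
apply: Hw. apply: (strat_plays (a := u) (b := v) Hst) => //.
  by rewrite -E.
by rewrite size_cat size_rcons oddD (negbTE Hu) /=; move: Hev; case: odd.
Qed.

Lemma part2 (A : cgame) (sigma : seq (mov A) -> Prop)
          (tau : seq (mov (tensor (dual A) two)) -> Prop) :
      is_strategy sigma -> winning sigma ->
      is_strategy tau -> winning tau ->
      forall u, interaction sigma tau u -> well_parenthesized u.
Proof.
move=> Hs Hws Ht Hwt u0 [->|[s [m [-> [_ [Hsm Hto]]]]]].
  split=> u t v m E; exfalso; move: (congr1 size E);
    by rewrite !size_cat size_rcons; case: (size u).
split; first exact: part1 Hsm.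
move=> u1 t v m' E Hev Hm'.
have [_ [_ Hevs]] := (Hs.1 _ Hsm).
rewrite size_rcons /= negbK in Hevs.
case/lastP: v E => [|v' x] E.
  rewrite cats0 -rcons_cat in E.
  case: (rcons_inj E) => E1 E2; subst.
  have := strat_pol Hs (a := u1 ++ t) (b := [::]) (m := m').
  rewrite cats1 Hm' => /(_ Hsm). rewrite size_cat. by rewrite -size_cat Hevs.
rewrite -rcons_cat -rcons_cat in E. case: (rcons_inj E) => E1 E2; subst s; subst x.
have Hsm' : sigma ((u1 ++ t) ++ m' :: (v' ++ [:: m])).
  by move: Hsm; rewrite -cats1 -!catA cat_rcons.
have := strat_pol Hs Hsm'. rewrite Hm' size_cat.
case Ho: (odd (size u1 + size t)) => // _.
rewrite size_rcons /= negbK in Hev.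
have Hu : odd (size u1) by move: Ho Hev; rewrite oddD; case: odd; case: odd.
set f := (fun m0 : mov A => @inl (mov (dual A) * pos two) (pos (dual A) * mov two) (m0, true)).
have Hp : plays tau (map f (rcons t m')).
  apply: (@strat_plays (tensor (dual A) two) tau ((@inr (mov (dual A) * pos two) (pos (dual A) * mov two) (Defs.root A, tt)) :: map f u1) (map f (rcons t m')) (map f v') Ht).
  - by move: Hto; rewrite /o_cons !map_cat.
  - by rewrite /= size_map Hu.
  - by rewrite /= size_cat !size_map size_rcons oddD Hu /= Hev.
have := Hwt _ Hp. rewrite /= restrL_map /= !addn0. by [].
Qed.

Theorem mainTheorem4 (A : cgame) :
  is_payoff_game A ->
  (forall sigma : seq (mov A) -> Prop,
      is_strategy sigma -> winning sigma ->
      forall s, sigma s -> wp_player s) /\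
  (forall (sigma : seq (mov A) -> Prop)
          (tau : seq (mov (tensor (dual A) two)) -> Prop),
      is_strategy sigma -> winning sigma ->
      is_strategy tau -> winning tau ->
      forall u, interaction sigma tau u -> well_parenthesized u).
Proof.
move=> _; split; [exact: part1 | exact: part2].
Qed.
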